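(* Let $S=S(c,r)\subset\mathbb{R}^{n+1}$ be the sphere of center $c$ and radius $r$, and let $\mathcal{V}=\{V_1,\dots,V_s\}$ be a finite collection of codimension-one affine subspaces of $\mathbb{R}^{n+1}$ all containing $c$. Let $x,y\in S$ with $\mathcal{V}_x=\mathcal{V}_y$ and $y\in S_\alpha(x)$, where $S_\alpha=S_\alpha(x)$ is the stratum of $x$. Then for every $\epsilon>0$ the stratifications $(\partial_{rel}F_\alpha(x,\epsilon),\mathcal{V}_x)$ and $(\partial_{rel}F_\alpha(y,\epsilon),\mathcal{V}_y)$ are isometric.
   Context: For $x\in S$, $\mathcal{V}_x$ is the set of $V_i\in\mathcal{V}$ containing $x$. For $\alpha\subset\{1,\dots,s\}$, $V_\alpha=\bigcap_{i\in\alpha}V_i$ (with $V_\emptyset=\mathbb{R}^{n+1}$) and $S_\alpha=S\cap V_\alpha$ (a great sphere). The stratum $S_\alpha(x)$ of $x$ is the lowest-dimensional $S_\alpha$ containing $x$ (namely $S\cap\bigcap_{V_i\in\mathcal{V}_x}V_i$). For $z\in S_\alpha$ and $\epsilon>0$, write $W_\alpha$ for the linear subspace orthogonal to the direction space of $V_\alpha$; the relative boundary of the spherical cap with top $z$ is $\partial_{rel}F_\alpha(z,\epsilon)=\{p\in S: p-c=t(z-c)+u,\ t>0,\ u\in W_\alpha,\ \|u\|=\epsilon\}$; it is a Euclidean sphere (possibly empty) whose center lies on the line $c+\mathbb{R}(z-c)\subset V_\alpha$. A pair $(\Sigma,\mathcal{W})$ of a Euclidean sphere $\Sigma$ and a finite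 collection $\mathcal{W}$ of affine hyperplanes is a stratification; here $\mathcal{V}_x$ induces the stratification of $\partial_{rel}F_\alpha(x,\epsilon)$ given by the intersections of this sphere with members of $\mathcal{V}_x$. Two stratifications $(\Sigma_1,\mathcal{W}_1)$, $(\Sigma_2,\mathcal{W}_2)$ are isometric if there is a bijection $j:\mathcal{W}_1\to\mathcal{W}_2$ and an orthogonal affine map $O$ with $O(\Sigma_1)=\Sigma_2$ and $O(\Sigma_1\cap W)=\Sigma_2\cap j(W)$ for every $W\in\mathcal{W}_1$. *)

(* Defs.v *)
(* R : realType, points of R^{n+1} are row vectors 'rV[R]_n.+1 *)
From HB Require Import structures.
From mathcomp Require Import all_boot all_order all_algebra.
From mathcomp Require Import classical_sets functions reals.
Set Implicit Arguments. Unset Strict Implicit. Unset Printing Implicit Defensive.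
Import Order.TTheory GRing.Theory Num.Theory.
Local Open Scope ring_scope.
Local Open Scope classical_set_scope.

Section Defs.
Variables (R : realType) (n : nat).
Notation pt := 'rV[R]_n.+1.

Definition dotp (u v : pt) : R := (u *m v^T) 0 0.
Definition enorm (u : pt) : R := Num.sqrt (dotp u u).

Definition sphere (c : pt) (r : R) : set pt := [set p | enorm (p - c) = r].

Definition affine_hyperplane (H : set pt) : Prop :=
  exists (a : pt) (b : R), a != 0 /\ H = [set p | dotp a p = b].

(* V_alpha = intersection of V_i, i in alpha (V_empty = whole space) *)
Definition Valpha s (V : 'I_s -> set pt) (alpha : set 'I_s) : set pt :=
  \bigcap_(i in alpha) V i.

Definition Salpha s (c : pt) (r : R) (V : 'I_s -> set pt) (alpha : set 'I_s) : set pt :=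
  sphere c r `&` Valpha V alpha.

(* index set of the hyperplanes containing x; the stratum of x is S_(idx x) *)
Definition idx s (V : 'I_s -> set pt) (x : pt) : set 'I_s := [set i | V i x].

Definition Vcoll s (V : 'I_s -> set pt) (x : pt) : set (set pt) := V @` idx V x.

Definition direction (A : set pt) : set pt := [set p - q | p in A & q in A].

Definition Walpha s (V : 'I_s -> set pt) (alpha : set 'I_s) : set pt :=
  [set u | forall v, direction (Valpha V alpha) v -> dotp u v = 0].

(* relative boundary of the spherical cap with top z *)
Definition relbd s (c : pt) (r : R) (V : 'I_s -> set pt) (alpha : set 'I_s)
    (z : pt) (eps : R) : set pt :=
  [set p | sphere c r p /\ exists (t : R) (u : pt),
     [/\ 0 < t, Walpha V alpha u, enorm u = eps & p - c = t *: (z - c) + u]].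

Definition orth_affine (O : pt -> pt) : Prop :=
  exists (Q : 'M[R]_n.+1) (b : pt), Q *m Q^T = 1%:M /\ forall p, O p = p *m Q + b.

Definition isometric_strat (S1 : set pt) (W1 : set (set pt))
    (S2 : set pt) (W2 : set (set pt)) : Prop :=
  exists (j : set pt -> set pt) (O : pt -> pt),
    [/\ set_bij W1 W2 j, orth_affine O, O @` S1 = S2 &
        forall W, W1 W -> O @` (S1 `&` W) = S2 `&` j W].

End Defs.

(* Main.v *)
Require Import Defs.
From HB Require Import structures.
From mathcomp Require Import all_boot all_order all_algebra.
From mathcomp Require Import classical_sets functions reals.
Import Order.TTheory GRing.Theory Num.Theory.
Local Open Scope ring_scope.
Local Open Scope classical_set_scope.
Set Implicit Arguments. Unset Strict Implicit.
Lemma dotpDl (R : realType) n (u v w : 'rV[R]_n.+1) : dotp (u + v) w = dotp u w + dotp v w.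
Proof. by rewrite /dotp mulmxDl mxE. Qed.
Lemma dotpZl (R : realType) n a (u w : 'rV[R]_n.+1) : dotp (a *: u) w = a * dotp u w.
Proof. by rewrite /dotp -scalemxAl mxE. Qed.
Lemma dotpC (R : realType) n (u w : 'rV[R]_n.+1) : dotp u w = dotp w u.
Proof. by rewrite /dotp -[w *m u^T]trmxK trmx_mul trmxK [in RHS]mxE. Qed.
Lemma dotpNl (R : realType) n (u w : 'rV[R]_n.+1) : dotp (- u) w = - dotp u w.
Proof. by rewrite -scaleN1r dotpZl mulN1r. Qed.
Lemma dotpBl (R : realType) n (u v w : 'rV[R]_n.+1) : dotp (u - v) w = dotp u w - dotp v w.
Proof. by rewrite dotpDl dotpNl. Qed.
Lemma dotpDr (R : realType) n (u v w : 'rV[R]_n.+1) : dotp w (u + v) = dotp w u + dotp w v.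
Proof. by rewrite !(@dotpC _ _ w) dotpDl. Qed.
Lemma dotpZr (R : realType) n a (u w : 'rV[R]_n.+1) : dotp w (a *: u) = a * dotp w u.
Proof. by rewrite !(@dotpC _ _ w) dotpZl. Qed.
Lemma dotpBr (R : realType) n (u v w : 'rV[R]_n.+1) : dotp w (u - v) = dotp w u - dotp w v.
Proof. by rewrite !(@dotpC _ _ w) dotpBl. Qed.
Lemma dotpE (R : realType) n (u w : 'rV[R]_n.+1) : dotp u w = \sum_j u 0 j * w 0 j.
Proof. by rewrite /dotp mxE; apply: eq_bigr => j _; rewrite mxE. Qed.
Lemma dotp_ge0 (R : realType) n (u : 'rV[R]_n.+1) : 0 <= dotp u u.
Proof. by rewrite dotpE; apply: sumr_ge0 => j _; rewrite -expr2 sqr_ge0. Qed.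
Lemma dotp_eq0 (R : realType) n (u : 'rV[R]_n.+1) : dotp u u = 0 -> u = 0.
Proof.
rewrite dotpE => H; apply/rowP => j; rewrite mxE.
have := @psumr_eq0P _ _ xpredT (fun j => u 0 j * u 0 j).
move=> /(_ (fun i _ => ltac:(by rewrite -expr2 sqr_ge0)) H j isT) /eqP.
by rewrite mulf_eq0 orbb => /eqP.
Qed.
Lemma dotp_mx (R : realType) n (u w : 'rV[R]_n.+1) : (u *m w^T) *m w = dotp u w *: w.
Proof. by rewrite [u *m _]mx11_scalar mul_scalar_mx. Qed.
From mathcomp Require Import ring.
Definition refl (R : realType) n (w v : 'rV[R]_n.+1) := v - (2 / dotp w w * dotp v w) *: w.
Lemma keyk (R : realType) (d : R) : 2 / d * (2 / d) * d = 2 * (2 / d).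
Proof.
have [->|dn0] := eqVneq d 0; first by rewrite invr0 !mulr0.
by field.
Qed.
Lemma reflD (R : realType) n (w a b : 'rV[R]_n.+1) : refl w (a + b) = refl w a + refl w b.
Proof. rewrite /refl dotpDl mulrDr scalerDl; apply/rowP => j; rewrite !mxE; ring. Qed.
Lemma reflZ (R : realType) n t (w a : 'rV[R]_n.+1) : refl w (t *: a) = t *: refl w a.
Proof. rewrite /refl dotpZl; apply/rowP => j; rewrite !mxE; ring. Qed.
Lemma refl_orth (R : realType) n (w v : 'rV[R]_n.+1) : dotp v w = 0 -> refl w v = v.
Proof. by rewrite /refl => ->; rewrite mulr0 scale0r subr0. Qed.
Lemma refl_dotp (R : realType) n (w v v' : 'rV[R]_n.+1) :
  dotp (refl w v) (refl w v') = dotp v v'.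
Proof.
rewrite /refl !(dotpBl, dotpBr, dotpZl, dotpZr).
set k := 2 / dotp w w.
have H := keyk (dotp w w); rewrite -/k in H.
rewrite (dotpC w v'); clearbody k.
have -> : k * dotp v w * (k * dotp v' w * dotp w w) = dotp v w * dotp v' w * (k * k * dotp w w) by ring.
rewrite H; ring.
Qed.
Lemma reflK (R : realType) n (w v : 'rV[R]_n.+1) : refl w (refl w v) = v.
Proof.
rewrite {1}/refl {2}/refl dotpBl dotpZl.
set k := 2 / dotp w w.
have H := keyk (dotp w w); rewrite -/k in H.
rewrite /refl -/k; clearbody k.
have -> : k * (dotp v w - k * dotp v w * dotp w w) = k * dotp v w - dotp v w * (k * k * dotp w w) by ring.
rewrite H; apply/rowP => j; rewrite !mxE; ring.
Qed.
Lemma refl_swap (R : realType) n (X Y : 'rV[R]_n.+1) :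
  dotp X X = dotp Y Y -> refl (X - Y) X = Y.
Proof.
move=> E.
have [/eqP|ne] := eqVneq (X - Y) 0.
  by rewrite subr_eq0 => /eqP ->; rewrite /refl subrr scaler0 subr0.
have dn0 : dotp (X - Y) (X - Y) != 0 by apply/eqP => /dotp_eq0; apply/eqP.
have H2 : 2 * dotp X (X - Y) = dotp (X - Y) (X - Y).
  rewrite !(dotpBl, dotpBr) (@dotpC _ _ Y X) -E; ring.
rewrite /refl.
have -> : 2 / dotp (X - Y) (X - Y) * dotp X (X - Y) = 1.
  have dX : dotp X (X - Y) != 0.
    by apply: contraNneq dn0; rewrite -H2 => ->; rewrite mulr0.
  by rewrite -H2; field.
by rewrite scale1r opprB addrC subrK.
Qed.
Lemma refl_hyp (R : realType) n (w a v : 'rV[R]_n.+1) : dotp a w = 0 ->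
  dotp a (refl w v) = dotp a v.
Proof. by move=> H; rewrite /refl dotpBr dotpZr H mulr0 subr0. Qed.
Lemma addrKl' (R : realType) n (c a : 'rV[R]_n.+1) : c + a - c = a.
Proof. by rewrite addrC addKr. Qed.

Definition Qm (R : realType) n (w : 'rV[R]_n.+1) : 'M[R]_n.+1 :=
  1%:M - (2 / dotp w w) *: (w^T *m w).

Lemma refl_mx (R : realType) n (w v : 'rV[R]_n.+1) : v *m Qm w = refl w v.
Proof.
by rewrite /Qm mulmxBr mulmx1 -scalemxAr mulmxA dotp_mx scalerA /refl.
Qed.

Lemma orth_refl (R : realType) n (c w : 'rV[R]_n.+1) :
  orth_affine (fun p => c + refl w (p - c)).
Proof.
exists (Qm w), (c - c *m Qm w); split.
  have -> : (Qm w)^T = Qm w.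
    by rewrite /Qm linearB /= tr_scalar_mx linearZ /= trmx_mul trmxK.
  rewrite -[Qm w *m Qm w]mul1mx; apply/row_matrixP => i.
  by rewrite row_mul mulmxA !refl_mx reflK.
move=> p; rewrite -refl_mx mulmxBl; apply/rowP => j; rewrite !mxE; ring.
Qed.

Lemma img_inv (T : Type) (O : T -> T) (A B : set T) :
  (forall p, A p -> B (O p)) -> (forall p, B p -> A (O p)) ->
  (forall p, O (O p) = p) -> O @` A = B.
Proof.
move=> AB BA OO; apply/seteqP; split => [_ [p Ap <-]|q Bq]; first exact: AB.
by exists (O q); [apply: BA | apply: OO].
Qed.

Lemma enorm_refl (R : realType) n (w v : 'rV[R]_n.+1) : enorm (refl w v) = enorm v.
Proof. by rewrite /enorm refl_dotp. Qed.

Lemma map_relbd (R : realType) n s (c : 'rV[R]_n.+1) r (V : 'I_s -> set 'rV[R]_n.+1)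
    alpha x y w eps :
  refl w (x - c) = y - c -> (forall u, Walpha V alpha u -> dotp u w = 0) ->
  forall p, relbd c r V alpha x eps p -> relbd c r V alpha y eps (c + refl w (p - c)).
Proof.
move=> Lx HW p [Sp [t [u [t0 Wu nu E]]]]; split.
  by rewrite /sphere /= addrKl' enorm_refl.
exists t, u; split => //.
by rewrite addrKl' E reflD reflZ Lx (refl_orth (HW _ Wu)).
Qed.

Lemma hyp_refl (R : realType) n (c x y : 'rV[R]_n.+1) (H : set 'rV[R]_n.+1) p :
  affine_hyperplane H -> H c -> H x -> H y ->
  H (c + refl ((x - c) - (y - c)) (p - c)) <-> H p.
Proof.
move=> [a [b [_ ->]]] /= Hc Hx Hy.
have aw : dotp a ((x - c) - (y - c)) = 0 by rewrite !dotpBr Hc Hx Hy !subrr.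
by rewrite dotpDr refl_hyp // dotpBr Hc addrC subrK.
Qed.
Theorem lemma5p2 (R : realType) (n s : nat) (c : 'rV[R]_n.+1) (r : R)
    (V : 'I_s -> set 'rV[R]_n.+1) :
  0 < r ->
  (forall i, affine_hyperplane (V i)) ->
  (forall i, V i c) ->
  forall x y : 'rV[R]_n.+1,
    sphere c r x -> sphere c r y ->
    Vcoll V x = Vcoll V y ->
    Salpha c r V (idx V x) y ->
    forall eps : R, 0 < eps ->
      isometric_strat (relbd c r V (idx V x) x eps) (Vcoll V x)
                      (relbd c r V (idx V x) y eps) (Vcoll V y).
Proof.
move=> r0 Vh Vc x y Sx Sy EV [_ Vay] eps e0.
rewrite -EV.
set w := (x - c) - (y - c).
set O := fun p => c + refl w (p - c).
have nx : dotp (x - c) (x - c) = dotp (y - c) (y - c).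
  move: Sx Sy; rewrite /sphere /enorm /= => Ex Ey.
  by rewrite -(sqr_sqrtr (dotp_ge0 (x - c))) -(sqr_sqrtr (dotp_ge0 (y - c))) Ex Ey.
have Lx : refl w (x - c) = y - c by apply: refl_swap.
have Ly : refl w (y - c) = x - c by rewrite -Lx reflK.
have HW : forall u, Walpha V (idx V x) u -> dotp u w = 0.
  move=> u Wu; apply: Wu; exists x => //; exists y => //.
  by rewrite /w opprB addrC addrA subrK addrC.
have OO : forall p, O (O p) = p.
  by move=> p; rewrite /O addrKl' reflK addrC subrK.
exists id, O; split.
- split; [by move=> W | by move=> ? ? ? ? | by move=> W HW'; exists W].
- exact: orth_refl.
- apply: img_inv => // p Hp; [exact: (map_relbd Lx HW Hp) | exact: (map_relbd Ly HW Hp)].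
- move=> _ [i /= Vix <-].
  have Viy : V i y by apply: Vay.
  apply: img_inv => // p [Hp Vp]; split.
  + exact: (map_relbd Lx HW Hp).
  + by apply/(hyp_refl _ (Vh i) (Vc i) Vix Viy).
  + exact: (map_relbd Ly HW Hp).
  + by apply/(hyp_refl _ (Vh i) (Vc i) Vix Viy).
Qed.
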